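(* Let $T$ be a compact metric space with a finite Borel measure, $C:T\times T\to\mathbb{R}$ a continuous symmetric positive semidefinite kernel with Mercer expansion $C(s,t)=\sum_j\lambda_j\phi_j(s)\phi_j(t)$ ($\lambda_1\ge\lambda_2\ge\dots>0$, $\{\phi_j\}$ orthonormal in $L^2(T)$), and let $\eta>1$ be such that $\mathrm{tr}(C^{\eta-1})=\sum_j\lambda_j^{\eta-1}<\infty$ and $\kappa^2:=\sup_{x\in T}C^\eta(x,x)<\infty$, where $C^\eta(s,t)=\sum_j\lambda_j^\eta\phi_j(s)\phi_j(t)$. Let $\mathcal{H}_{C^\eta}$ be the RKHS of $C^\eta$ with norm $\|\cdot\|_{C^\eta}$. Data records are $d=(x,y)\in T\times\mathcal{Y}$, and the loss is $L(d,f)=\ell(y,f(x))$ where, for each $y$, $u\mapsto\ell(y,u)$ is convex and $M$-Lipschitz on $\mathbb{R}$ ($M$-admissible loss). For a dataset $D=(d_1,\dots,d_n)$ and $\psi>0$, let $\hat f_D$ be the minimizer over $f\in\mathcal{H}_{C^\eta}$ of $\frac1n\sum_{i=1}^nL(d_i,f)+\psi\|f\|_{C^\eta}^2$. Then $$\sup_{D\sim D'}\|\hat f_D-\hat f_{D'}\|_{1,C}\le\frac{M}{\psi n}\sqrt{\sup_{x}C^\eta(x,x)}\,\sqrt{\mathrm{tr}(C^{\eta-1})}.$$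
   Context: For $h\in L^2(T)$, $h_j=\langle h,\phi_j\rangle_{L^2}$ and $\|h\|_{1,C}=\sum_j|h_j|/\sqrt{\lambda_j}$. Datasets $D\sim D'$ are adjacent if they differ in exactly one record. (The paper's display writes the penalty as $\psi\|f\|_{C^\eta}$; its argument uses the squared norm, as stated here.) *)

(* Defs.v *)
From HB Require Import structures.
From mathcomp Require Import all_boot all_order all_algebra.
From mathcomp Require Import all_classical all_reals all_analysis.
Set Implicit Arguments. Unset Strict Implicit. Unset Printing Implicit Defensive.
Import Order.TTheory GRing.Theory Num.Theory.
Import numFieldNormedType.Exports.
Local Open Scope classical_set_scope.
Local Open Scope ring_scope.

Section Defs.
Variables (R : realType) (T : Type).

Definition kernel_symmetric (C : T -> T -> R) := forall s t, C s t = C t s.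

Definition kernel_psd (C : T -> T -> R) :=
  forall (m : nat) (x : 'I_m -> T) (c : 'I_m -> R),
    0 <= \sum_(i < m) \sum_(j < m) c i * c j * C (x i) (x j).

Definition kernel_pow (lam : nat -> R) (phi : nat -> T -> R) (eta : R)
  (s t : T) : R :=
  limn (fun N => \sum_(0 <= j < N) (lam j `^ eta) * phi j s * phi j t).

Definition trace_pow (lam : nat -> R) (eta : R) : R :=
  limn (fun N => \sum_(0 <= j < N) lam j `^ (eta - 1)).

(* a : nat -> R is the coefficient sequence (in the Mercer basis) of a
   function f of the RKHS H_{C^eta}:  f = sum_j a_j phi_j  pointwise, with
   sum_j a_j^2 / lambda_j^eta < oo. *)
Definition rkhs_rep (lam : nat -> R) (phi : nat -> T -> R) (eta : R)
  (f : T -> R) (a : nat -> R) : Prop :=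
  cvgn (fun N => \sum_(0 <= j < N) a j ^+ 2 / lam j `^ eta) /\
  forall x, (fun N => \sum_(0 <= j < N) a j * phi j x) @ \oo --> f x.

Definition in_rkhs lam phi eta (f : T -> R) : Prop :=
  exists a, rkhs_rep lam phi eta f a.

(* squared RKHS norm ||f||_{C^eta}^2 = sum_j a_j^2 / lambda_j^eta
   (the representation is unique; we take the infimum for definiteness) *)
Definition rkhs_sqnorm lam phi eta (f : T -> R) : R :=
  inf [set limn (fun N => \sum_(0 <= j < N) a j ^+ 2 / lam j `^ eta)
      | a in rkhs_rep lam phi eta f].

Definition reg_risk (Y : Type) (ell : Y -> R -> R) (n : nat)
  (D : 'I_n -> T * Y) lam phi eta (psi : R) (f : T -> R) : R :=
  n%:R^-1 * \sum_(i < n) ell (D i).2 (f (D i).1) + psi * rkhs_sqnorm lam phi eta f.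

Definition is_reg_minimizer (Y : Type) (ell : Y -> R -> R) (n : nat)
  (D : 'I_n -> T * Y) lam phi eta (psi : R) (f : T -> R) : Prop :=
  in_rkhs lam phi eta f /\
  forall g, in_rkhs lam phi eta g ->
    reg_risk ell D lam phi eta psi f <= reg_risk ell D lam phi eta psi g.

Definition adjacent_datasets (Y : Type) (n : nat) (D D' : 'I_n -> T * Y) : Prop :=
  exists i, D i <> D' i /\ forall j, j <> i -> D j = D' j.

Definition admissible_loss (Y : Type) (ell : Y -> R -> R) (M : R) : Prop :=
  (forall y u v (t : R), 0 <= t <= 1 ->
     ell y (t * u + (1 - t) * v) <= t * ell y u + (1 - t) * ell y v) /\
  (forall y u v, `|ell y u - ell y v| <= M * `|u - v|).

End Defs.

Section L2.
Variables (R : realType) (T : pointedType) (G : set (set T)).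
Variable (mu : {measure set (g_sigma_algebraType G) -> \bar R}).

Definition l2_coef (phi : nat -> T -> R) (h : T -> R) (j : nat) : R :=
  Rintegral mu [set: g_sigma_algebraType G] (fun x => h x * phi j x).

Definition norm1C (lam : nat -> R) (phi : nat -> T -> R) (h : T -> R) : \bar R :=
  (\sum_(0 <= j <oo) ((`|l2_coef phi h j| / Num.sqrt (lam j))%:E))%E.
End L2.

(* Main.v *)
Require Import Defs.
From HB Require Import structures.
From mathcomp Require Import all_boot all_order all_algebra.
From mathcomp Require Import all_classical all_reals all_analysis.
From mathcomp Require Import ring lra measurable_realfun.
Import Order.TTheory GRing.Theory Num.Theory.
Import numFieldNormedType.Exports.
Local Open Scope classical_set_scope.
Local Open Scope ring_scope.


Section Ser.
Context (R : realType).

Lemma psum_nd (c : nat -> R) : (forall j, 0 <= c j) ->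
  nondecreasing_seq (fun N => \sum_(0 <= j < N) c j).
Proof. by move=> c0; apply: nondecreasing_series => n _ _; exact: c0. Qed.

Lemma psum_le_lim (c : nat -> R) N : (forall j, 0 <= c j) ->
  cvgn (fun N => \sum_(0 <= j < N) c j) ->
  \sum_(0 <= j < N) c j <= limn (fun N => \sum_(0 <= j < N) c j).
Proof. by move=> c0 cv; apply: nondecreasing_cvgn_le => //; exact: psum_nd. Qed.

Lemma psum_cvg_bound (c : nat -> R) B : (forall j, 0 <= c j) ->
  (forall N, \sum_(0 <= j < N) c j <= B) ->
  cvgn (fun N => \sum_(0 <= j < N) c j).
Proof.
move=> c0 cB; apply: nondecreasing_is_cvgn; first exact: psum_nd.
by exists B => _ [N _ <-]; exact: cB.
Qed.

Lemma psum_lim_ge0 (c : nat -> R) : (forall j, 0 <= c j) ->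
  cvgn (fun N => \sum_(0 <= j < N) c j) ->
  0 <= limn (fun N => \sum_(0 <= j < N) c j).
Proof.
move=> c0 cv; have := @psum_le_lim c 0 c0 cv; apply: le_trans.
by rewrite big_geq.
Qed.

Lemma lim_abs_le (u : nat -> R) l B : u @ \oo --> l ->
  (forall N, `|u N| <= B) -> `|l| <= B.
Proof.
move=> ul uB; have Hl : limn u = l by apply: cvg_lim.
have cu : cvgn u by apply/cvg_ex; exists l.
rewrite ler_norml; apply/andP; split.
  rewrite -Hl; apply: limr_ge => //; apply: nearW => N.
  by move: (uB N); rewrite ler_norml => /andP[].
rewrite -Hl; apply: limr_le => //; apply: nearW => N.
by move: (uB N); rewrite ler_norml => /andP[].
Qed.

Lemma CS_sum (N : nat) (u v : nat -> R) :
  (\sum_(0 <= j < N) u j * v j) ^+ 2 <=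
  (\sum_(0 <= j < N) u j ^+ 2) * (\sum_(0 <= j < N) v j ^+ 2).
Proof.
have E (a b : nat -> R) : (\sum_(0 <= i < N) a i) * (\sum_(0 <= j < N) b j)
   = \sum_(0 <= i < N) \sum_(0 <= j < N) a i * b j.
  by rewrite mulr_suml; apply: eq_bigr => i _; rewrite mulr_sumr.
have H : 0 <= \sum_(0 <= i < N) \sum_(0 <= j < N) (u i * v j - u j * v i) ^+ 2.
  by apply: sumr_ge0 => i _; apply: sumr_ge0 => j _; apply: sqr_ge0.
have H2 : \sum_(0 <= i < N) \sum_(0 <= j < N) (u i * v j - u j * v i) ^+ 2
  = (\sum_(0 <= j < N) u j ^+ 2) * (\sum_(0 <= j < N) v j ^+ 2)
    + (\sum_(0 <= j < N) v j ^+ 2) * (\sum_(0 <= j < N) u j ^+ 2)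
    - (\sum_(0 <= j < N) u j * v j) * (\sum_(0 <= j < N) u j * v j) *+ 2.
  rewrite !E.
  rewrite -!sumrMnl -big_split -sumrB; apply: eq_bigr => i _.
  rewrite -!sumrMnl -big_split -sumrB; apply: eq_bigr => j _.
  rewrite /=; ring.
move: H; rewrite H2 mulrC mulr2n -expr2.
lra.
Qed.

Lemma CS_abs (N : nat) (u v : nat -> R) A B :
  \sum_(0 <= j < N) u j ^+ 2 <= A -> \sum_(0 <= j < N) v j ^+ 2 <= B ->
  `|\sum_(0 <= j < N) u j * v j| <= Num.sqrt A * Num.sqrt B.
Proof.
move=> hA hB.
have A0 : 0 <= \sum_(0 <= j < N) u j ^+ 2 by apply: sumr_ge0 => j _; exact: sqr_ge0.
have B0 : 0 <= \sum_(0 <= j < N) v j ^+ 2 by apply: sumr_ge0 => j _; exact: sqr_ge0.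
rewrite -sqrtrM; last exact: le_trans A0 hA.
rewrite -sqrtr_sqr ler_sqrt; last by apply: mulr_ge0; [exact: le_trans A0 hA|exact: le_trans B0 hB].
apply: le_trans (CS_sum N u v) _.
by apply: ler_pM.
Qed.

End Ser.


Section Coef.
Context (R : realType) d (X : measurableType d)
  (mu : {finite_measure set X -> \bar R}) (phi : nat -> X -> R).
Hypothesis mphi : forall j, measurable_fun [set: X] (phi j).
Hypothesis L2 : forall j, mu.-integrable [set: X] (fun x => ((phi j x) ^+ 2)%:E).
Hypothesis orth : forall i j,
  Rintegral mu [set: X] (fun x => phi i x * phi j x) = (i == j)%:R.

Lemma abs_le_1sq (r : R) : `|r| <= 1 + r ^+ 2.
Proof.
have h := sqr_ge0 (`|r| - 1).
have e : r ^+ 2 = `|r| ^+ 2 by rewrite -normrX ger0_norm ?sqr_ge0.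
rewrite e; move: h; generalize `|r| => z; nra.
Qed.

Lemma int_phi j : mu.-integrable [set: X] (EFin \o phi j).
Proof.
have h1 : mu.-integrable [set: X] (fun x => (1 + phi j x ^+ 2)%:E).
  have := integrableD measurableT (finite_measure_integrable_cst mu 1 measurableT) (L2 j).
  apply: eq_integrable => //; exact: measurableT.
apply: (le_integrable measurableT _ _ h1).
  exact/measurable_EFinP.
move=> x _ /=; rewrite lee_fin [X in _ <= X]ger0_norm; last by rewrite addr_ge0 ?sqr_ge0.
exact: abs_le_1sq.
Qed.

Lemma uv_le (u v : R) : 0 <= u -> 0 <= v -> u * v <= u ^+ 2 + v ^+ 2.
Proof. move=> ? ?; nra. Qed.

Lemma ab_le (a b : R) : `|a * b| <= a ^+ 2 + b ^+ 2.
Proof.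
rewrite normrM.
have ea : a ^+ 2 = `|a| ^+ 2 by rewrite -normrX ger0_norm ?sqr_ge0.
have eb : b ^+ 2 = `|b| ^+ 2 by rewrite -normrX ger0_norm ?sqr_ge0.
by rewrite ea eb; apply: uv_le.
Qed.

Lemma int_lin (f g : X -> R) c :
  mu.-integrable [set: X] (EFin \o f) -> mu.-integrable [set: X] (EFin \o g) ->
  mu.-integrable [set: X] (EFin \o (fun x => f x + c * g x)).
Proof.
move=> hf hg.
have := integrableD measurableT hf (integrableZl measurableT c hg).
by apply: eq_integrable => //; exact: measurableT.
Qed.

Lemma Rint_lin (f g : X -> R) c :
  mu.-integrable [set: X] (EFin \o f) -> mu.-integrable [set: X] (EFin \o g) ->
  Rintegral mu [set: X] (fun x => f x + c * g x) =
  Rintegral mu [set: X] f + c * Rintegral mu [set: X] g.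
Proof.
move=> hf hg.
rewrite RintegralD //; last first.
  have := integrableZl measurableT c hg.
  by apply: eq_integrable => //; exact: measurableT.
by rewrite RintegralZl.
Qed.

Lemma int_pp k j : mu.-integrable [set: X] (EFin \o (fun x => phi k x * phi j x)).
Proof.
have h1 := integrableD measurableT (L2 k) (L2 j).
apply: (le_integrable measurableT _ _ h1).
  by apply/measurable_EFinP; apply: measurable_funM.
move=> x _ /=; rewrite lee_fin [X in _ <= X]ger0_norm; last by rewrite addr_ge0 ?sqr_ge0.
exact: ab_le.
Qed.

Lemma int_partial (a : nat -> R) j N :
  mu.-integrable [set: X]
    (EFin \o (fun x => (\sum_(0 <= k < N) a k * phi k x) * phi j x)) /\
  Rintegral mu [set: X] (fun x => (\sum_(0 <= k < N) a k * phi k x) * phi j x)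
   = \sum_(0 <= k < N) a k * (k == j)%:R.
Proof.
elim: N => [|N [IH1 IH2]].
  have E : (fun x => (\sum_(0 <= k < 0) a k * phi k x) * phi j x) = (fun=> 0).
    by apply: funext => x; rewrite big_geq // mul0r.
  rewrite E big_geq //; split.
    by have := integrable0 mu [set: X]; apply: eq_integrable => //; exact: measurableT.
  by rewrite Rintegral_cst // mul0r.
have E : (fun x => (\sum_(0 <= k < N.+1) a k * phi k x) * phi j x) =
  (fun x => (\sum_(0 <= k < N) a k * phi k x) * phi j x + a N * (phi N x * phi j x)).
  by apply: funext => x; rewrite big_nat_recr //= mulrDl mulrA.
rewrite E big_nat_recr //=; split.
  by apply: int_lin => //; exact: int_pp.
by rewrite Rint_lin // ?IH2 ?orth //; exact: int_pp.
Qed.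

Lemma sum_delta (a : nat -> R) j n : (j < n)%N ->
  \sum_(0 <= k < n) a k * (k == j)%:R = a j.
Proof.
move=> jn; rewrite -(subnKC jn).
elim: (n - j.+1)%N => [|m IH].
  rewrite addn0 big_nat_recr //= eqxx mulr1 big_mkord big1 ?add0r // => k _.
  by rewrite (ltn_eqF (ltn_ord k)) mulr0.
by rewrite addnS big_nat_recr //= IH (gtn_eqF (leq_addr _ _)) mulr0 addr0.
Qed.

Lemma coef (a : nat -> R) (F : X -> R) (B : R) :
  (forall N x, `|\sum_(0 <= k < N) a k * phi k x| <= B) ->
  (forall x, (fun N => \sum_(0 <= k < N) a k * phi k x) @ \oo --> F x) ->
  forall j, Rintegral mu [set: X] (fun x => F x * phi j x) = a j.
Proof.
move=> hB hF j.
pose fN := fun N x => ((\sum_(0 <= k < N) a k * phi k x) * phi j x)%:E.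
have H1 : forall n, measurable_fun setT (fN n).
  by move=> n; exact: (measurable_int _ (int_partial a j n).1).
have H2 : forall x, setT x -> fN ^~ x @ \oo --> (F x * phi j x)%:E.
  move=> x _; apply: cvg_EFin; first by apply: nearW.
  exact: cvgMr_tmp (hF x).
have H4 : mu.-integrable setT (fun x => (B * `|phi j x|)%:E).
  have := integrableZl measurableT B (integrable_norm (int_phi j)).
  by apply: eq_integrable => //; exact: measurableT.
have H5 : forall n x, setT x -> (`|fN n x| <= (B * `|phi j x|)%:E)%E.
  move=> n x _; rewrite /fN /= lee_fin normrM.
  by apply: ler_wpM2r => //.
have H3 : forall x, setT x -> (fun x => (B * `|phi j x|)%:E) x \is a fin_num by [].
have dc := dominated_cvg measurableT H1 H2 H3 H4 H5.
have E : forall n, (j < n)%N -> (\int[mu]_(x in setT) fN n x = (a j)%:E)%E.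
  move=> n jn; rewrite -(@sum_delta a j n jn) -(int_partial a j n).2 /Rintegral fineK //.
  exact: (integrable_fin_num measurableT (int_partial a j n).1).
have dc2 : (\int[mu]_(x in setT) fN n x)%E @[n --> \oo] --> (a j)%:E.
  apply: cvg_near_cst; near=> n; apply: E; near: n.
  by exists j.+1 => // n.
have := cvg_unique (@ereal_hausdorff R) dc dc2.
by rewrite /Rintegral => ->.
Unshelve. all: by end_near.
Qed.

End Coef.


Section Series.
Context (R : realType) (T : Type) (lam : nat -> R) (phi : nat -> T -> R) (eta : R).
Hypothesis Hlam_pos : forall j, 0 < lam j.
Hypothesis Hlam_dec : forall j, lam j.+1 <= lam j.
Hypothesis Heta : 1 < eta.
Hypothesis Hm : forall s, cvgn (fun N => \sum_(0 <= j < N) lam j * phi j s * phi j s).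

Lemma lam_le0 j : lam j <= lam 0.
Proof. by elim: j => [//|j IH]; exact: le_trans (Hlam_dec j) IH. Qed.

Lemma pow_split x : 0 < x -> x `^ eta = x `^ (eta - 1) * x.
Proof.
move=> x0; rewrite -[X in _ * X](powRr1 (ltW x0)) -powRD; first by rewrite subrK.
by apply/implyP => _; rewrite gt_eqF.
Qed.

Lemma lampow_gt0 j : 0 < lam j `^ eta.
Proof. exact: powR_gt0. Qed.

Lemma kterm_ge0 x j : 0 <= lam j `^ eta * phi j x * phi j x.
Proof. by rewrite -mulrA -expr2 mulr_ge0 ?powR_ge0 ?sqr_ge0. Qed.

Lemma K_cvg x : cvgn (fun N => \sum_(0 <= j < N) lam j `^ eta * phi j x * phi j x).
Proof.
apply: (@psum_cvg_bound _ _ (lam 0 `^ (eta - 1) *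
   limn (fun N => \sum_(0 <= j < N) lam j * phi j x * phi j x))).
  exact: kterm_ge0.
move=> N.
have t0 j : 0 <= lam j * phi j x * phi j x.
  by rewrite -mulrA -expr2 mulr_ge0 ?sqr_ge0 // ltW.
apply: le_trans _ (ler_wpM2l (powR_ge0 _ _) (psum_le_lim _ _ N t0 (Hm x))).
rewrite mulr_sumr; apply: ler_sum => j _.
rewrite pow_split // -!mulrA ler_wpM2r //.
  by rewrite -expr2 mulr_ge0 ?sqr_ge0 // ltW.
apply: ge0_ler_powR; first by rewrite subr_ge0 ltW.
- by rewrite nnegrE ltW.
- by rewrite nnegrE ltW.
- exact: lam_le0.
Qed.

Definition Kx x := kernel_pow lam phi eta x x.

Lemma K_partial_le x N :
  \sum_(0 <= j < N) lam j `^ eta * phi j x * phi j x <= Kx x.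
Proof. by apply: psum_le_lim; [exact: kterm_ge0 | exact: K_cvg]. Qed.

Lemma K_ge0 x : 0 <= Kx x.
Proof. by apply: psum_lim_ge0; [exact: kterm_ge0 | exact: K_cvg]. Qed.

Definition Qp (c : nat -> R) N := \sum_(0 <= j < N) c j ^+ 2 / lam j `^ eta.
Definition Qcvg c := cvgn (Qp c).
Definition Q c := limn (Qp c).

Lemma qterm_ge0 (c : nat -> R) j : 0 <= c j ^+ 2 / lam j `^ eta.
Proof. by rewrite divr_ge0 ?sqr_ge0 ?powR_ge0. Qed.

Lemma Qp_le (c : nat -> R) N : Qcvg c -> Qp c N <= Q c.
Proof. by move=> h; apply: psum_le_lim => //; exact: qterm_ge0. Qed.

Lemma Q_ge0 c : Qcvg c -> 0 <= Q c.
Proof. by move=> h; apply: psum_lim_ge0 => //; exact: qterm_ge0. Qed.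

Lemma ptwise (c : nat -> R) x N : Qcvg c ->
  `|\sum_(0 <= j < N) c j * phi j x| <= Num.sqrt (Q c) * Num.sqrt (Kx x).
Proof.
move=> hc.
pose w j := Num.sqrt (lam j `^ eta).
have w0 j : 0 < w j by rewrite sqrtr_gt0 lampow_gt0.
have w2 j : w j ^+ 2 = lam j `^ eta by rewrite sqr_sqrtr // powR_ge0.
have E : \sum_(0 <= j < N) c j * phi j x =
         \sum_(0 <= j < N) (c j / w j) * (w j * phi j x).
  apply: eq_bigr => j _; rewrite mulrA divfK //; exact: lt0r_neq0.
rewrite E; apply: CS_abs.
  apply: le_trans _ (Qp_le _ N hc); rewrite /Qp le_eqVlt; apply/orP; left; apply/eqP.
  by apply: eq_bigr => j _; rewrite expr_div_n w2.
apply: le_trans _ (K_partial_le x N); rewrite le_eqVlt; apply/orP; left; apply/eqP.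
by apply: eq_bigr => j _; rewrite exprMn w2 expr2 mulrA.
Qed.

Lemma Qcvg_lin (a b : nat -> R) (al be : R) : Qcvg a -> Qcvg b ->
  Qcvg (fun j => al * a j + be * b j).
Proof.
move=> ha hb; rewrite /Qcvg /Qp; apply: (@psum_cvg_bound _ _ (2 * al ^+ 2 * Q a + 2 * be ^+ 2 * Q b)).
  by move=> j; exact: (qterm_ge0 (fun j => al * a j + be * b j) j).
move=> N.
apply: (@le_trans _ _ (2 * al ^+ 2 * Qp a N + 2 * be ^+ 2 * Qp b N)); last first.
  by apply: lerD; apply: ler_wpM2l; try apply: Qp_le => //; apply: mulr_ge0 => //; apply: sqr_ge0.
rewrite /Qp !mulr_sumr -big_split; apply: ler_sum => j _ /=.
have L0 := lampow_gt0 j.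
rewrite !mulrA -mulrDl; apply: ler_wpM2r; first by rewrite invr_ge0 ltW.
have := sqr_ge0 (al * a j - be * b j). nra.
Qed.

Lemma Q_comb (a b : nat -> R) (t : R) : Qcvg a -> Qcvg b ->
  Q (fun j => (1 - t) * a j + t * b j) =
  (1 - t) * Q a + t * Q b - t * (1 - t) * Q (fun j => a j - b j).
Proof.
move=> ha hb.
have hab : Qcvg (fun j => a j - b j).
  have := @Qcvg_lin a b 1 (-1) ha hb.
  have -> // : (fun j => 1 * a j + -1 * b j) = (fun j => a j - b j).
  by apply: funext => j; rewrite mul1r mulN1r.
apply: cvg_lim => //.
have E : Qp (fun j => (1 - t) * a j + t * b j) =
   (fun N => (1 - t) * Qp a N + t * Qp b N - t * (1 - t) * Qp (fun j => a j - b j) N).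
  apply: funext => N; rewrite /Qp !mulr_sumr -big_split -sumrB /=.
  by apply: eq_bigr => j _; ring.
rewrite E; apply: cvgB; first apply: cvgD.
- exact: cvgMl_tmp.
- exact: cvgMl_tmp.
- exact: cvgMl_tmp.
Qed.

End Series.

Set Implicit Arguments. Unset Strict Implicit.


Lemma lim_t (R : realType) (c x : R) :
  (forall t, 0 < t < 1 -> (1 - t) * c <= x) -> c <= x.
Proof.
move=> H; rewrite leNgt; apply/negP => xc.
have c0 : 0 < c.
  have h2 : 0 < (2:R)^-1 < 1 by apply/andP; split; lra.
  have := H _ h2; lra.
set u := c - x.
have u0 : 0 < u by rewrite subr_gt0.
have uc0 : 0 < u + c by rewrite addr_gt0.
have t01 : 0 < u / (u + c) < 1.
  apply/andP; split; first by rewrite divr_gt0.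
  by rewrite ltr_pdivrMr // mul1r ltrDl.
have := H _ t01.
have -> : 1 - u / (u + c) = c / (u + c) by field; rewrite gt_eqF.
rewrite mulrAC ler_pdivrMr // => h.
have : x = c - u by rewrite /u; ring.
move=> ex; rewrite ex in h; nra.
Qed.

Section Rkhs.
Context (R : realType) (T : pseudoPMetricType R)
  (mu : {finite_measure set (g_sigma_algebraType (@open T)) -> \bar R})
  (lam : nat -> R) (phi : nat -> T -> R) (eta : R).
Hypothesis Hlam_pos : forall j, 0 < lam j.
Hypothesis Hlam_dec : forall j, lam j.+1 <= lam j.
Hypothesis Hphi_meas : forall j,
     measurable_fun [set: g_sigma_algebraType (@open T)]
       (phi j : g_sigma_algebraType (@open T) -> R).
Hypothesis Hphi_L2 : forall j,
     mu.-integrable [set: g_sigma_algebraType (@open T)]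
       (fun x => ((phi j x) ^+ 2)%:E).
Hypothesis Hphi_orth : forall i j,
     Rintegral mu [set: g_sigma_algebraType (@open T)]
       (fun x => phi i x * phi j x) = (i == j)%:R.
Hypothesis Heta : 1 < eta.
Hypothesis Hm : forall s, cvgn (fun N => \sum_(0 <= j < N) lam j * phi j s * phi j s).
Hypothesis Hkappa : exists k : R, forall x : T, kernel_pow lam phi eta x x <= k.

Let S := sup [set kernel_pow lam phi eta x x | x in [set: T]].

Lemma K_le_S x : Kx R T lam phi eta x <= S.
Proof.
apply: ub_le_sup; last by exists x.
by case: Hkappa => k hk; exists k => _ [y _ <-]; exact: hk.
Qed.

Lemma S_ge0 : 0 <= S.
Proof. exact: le_trans (@K_ge0 R T lam phi eta Hlam_pos Hlam_dec Heta Hm (point : T)) (K_le_S (point : T)). Qed.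

Lemma rep_bound f a : rkhs_rep lam phi eta f a ->
  forall N x, `|\sum_(0 <= k < N) a k * phi k x| <= Num.sqrt (Q R lam eta a) * Num.sqrt S.
Proof.
move=> [ha _] N x.
apply: le_trans (@ptwise R T lam phi eta Hlam_pos Hlam_dec Heta Hm a x N ha) _.
by apply: ler_wpM2l; [exact: sqrtr_ge0 | rewrite ler_sqrt ?S_ge0 // K_le_S].
Qed.

Lemma rep_eval_bound f a : rkhs_rep lam phi eta f a ->
  forall x, `|f x| <= Num.sqrt (Q R lam eta a) * Num.sqrt S.
Proof.
move=> h x; apply: (@lim_abs_le R _ _ _ (h.2 x)) => N; have := rep_bound h N x; apply.
Qed.

Lemma rep_coef f a : rkhs_rep lam phi eta f a ->
  forall j, l2_coef mu phi f j = a j.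
Proof.
move=> h j; rewrite /l2_coef.
have := @coef R _ _ mu phi Hphi_meas Hphi_L2 Hphi_orth a f _ (rep_bound h) h.2 j; apply.
Qed.

Lemma sqnorm_eq f a : rkhs_rep lam phi eta f a ->
  rkhs_sqnorm lam phi eta f = Q R lam eta a.
Proof.
move=> h; rewrite /rkhs_sqnorm.
have -> : [set limn (fun N => \sum_(0 <= j < N) a j ^+ 2 / lam j `^ eta)
      | a in rkhs_rep lam phi eta f] = [set Q R lam eta a].
  apply/seteqP; split => [v [b hb <-]|v ->].
    have -> : b = a by apply: funext => j; rewrite -(rep_coef hb) (rep_coef h).
    by [].
  by exists a.
exact: inf1.
Qed.

Lemma rep_lin f g a b (al be : R) : rkhs_rep lam phi eta f a -> rkhs_rep lam phi eta g b ->
  rkhs_rep lam phi eta (fun x => al * f x + be * g x) (fun j => al * a j + be * b j).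
Proof.
move=> [ha hfa] [hb hgb]; split.
  exact: (@Qcvg_lin R lam eta Hlam_pos a b al be ha hb).
move=> x.
have -> : (fun N => \sum_(0 <= j < N) (al * a j + be * b j) * phi j x) =
  (fun N => al * \sum_(0 <= j < N) a j * phi j x + be * \sum_(0 <= j < N) b j * phi j x).
  apply: funext => N; rewrite !mulr_sumr -big_split; apply: eq_bigr => j _ /=.
  by rewrite mulrDl !mulrA.
by apply: cvgD; apply: cvgMl_tmp.
Qed.

Lemma loss_sum_convex (Y : Type) (ell : Y -> R -> R) M (Hell : admissible_loss ell M)
  n (D : 'I_n -> T * Y) (f g : T -> R) t : 0 <= t <= 1 ->
  n%:R^-1 * \sum_(i < n) ell (D i).2 ((1 - t) * f (D i).1 + t * g (D i).1) <=
  (1 - t) * (n%:R^-1 * \sum_(i < n) ell (D i).2 (f (D i).1)) +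
  t * (n%:R^-1 * \sum_(i < n) ell (D i).2 (g (D i).1)).
Proof.
move=> /andP[t0 t1].
rewrite mulrCA [t * _]mulrCA -mulrDr; apply: ler_wpM2l; first by rewrite invr_ge0.
rewrite !mulr_sumr -big_split; apply: ler_sum => i _ /=.
have h01 : 0 <= 1 - t <= 1 by apply/andP; split; lra.
have := Hell.1 (D i).2 (f (D i).1) (g (D i).1) _ h01.
by have -> : 1 - (1 - t) = t by ring.
Qed.

Lemma strong (Y : Type) (ell : Y -> R -> R) M (Hell : admissible_loss ell M)
  psi (Hpsi : 0 < psi) n (D : 'I_n -> T * Y) f g a b :
  rkhs_rep lam phi eta f a -> rkhs_rep lam phi eta g b ->
  is_reg_minimizer ell D lam phi eta psi f ->
  psi * Q R lam eta (fun j => a j - b j) <=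
  reg_risk ell D lam phi eta psi g - reg_risk ell D lam phi eta psi f.
Proof.
move=> hf hg [_ hmin].
set Lf := n%:R^-1 * \sum_(i < n) ell (D i).2 (f (D i).1).
set Lg := n%:R^-1 * \sum_(i < n) ell (D i).2 (g (D i).1).
have Ef : reg_risk ell D lam phi eta psi f = Lf + psi * Q R lam eta a.
  by rewrite /reg_risk (sqnorm_eq hf).
have Eg : reg_risk ell D lam phi eta psi g = Lg + psi * Q R lam eta b.
  by rewrite /reg_risk (sqnorm_eq hg).
rewrite Ef Eg.
apply: lim_t => t /andP[t0 t1].
have ht := rep_lin (1 - t) t hf hg.
have := hmin _ (ex_intro _ _ ht).
rewrite Ef /reg_risk (sqnorm_eq ht) (@Q_comb R lam eta Hlam_pos a b t hf.1 hg.1) /=.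
have := @loss_sum_convex Y ell M Hell n D f g t.
rewrite -/Lf -/Lg => /(_ _) hc.
have t01 : 0 <= t <= 1 by apply/andP; split; lra.
move: (hc t01) => {}hc h.
have hQ : 0 <= Q R lam eta (fun j => a j - b j).
  apply: Q_ge0; have := @Qcvg_lin R lam eta Hlam_pos a b 1 (-1) hf.1 hg.1.
  by have -> // : (fun j => 1 * a j + -1 * b j) = (fun j => a j - b j); apply: funext => j; rewrite mul1r mulN1r.
set q := Q R lam eta (fun j => a j - b j) in hQ h *.
set qa := Q R lam eta a in h *.
set qb := Q R lam eta b in h *.
set lt := n%:R^-1 * _ in hc h.
have h2 : t * ((1 - t) * (psi * q)) <= t * (Lg + psi * qb - (Lf + psi * qa)).
  nra.
rewrite ler_pM2l // in h2.
Qed.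

End Rkhs.

Unset Implicit Arguments. Set Strict Implicit.


Lemma diff_single (R : realType) (Z : Type) n (D D' : 'I_n -> Z) (F : Z -> R) i0 :
  (forall j, j <> i0 -> D j = D' j) ->
  \sum_(i < n) F (D i) - \sum_(i < n) F (D' i) = F (D i0) - F (D' i0).
Proof.
move=> hs.
rewrite (bigD1 i0) //= [X in _ - X](bigD1 i0) //=.
have -> : \sum_(i < n | i != i0) F (D i) = \sum_(i < n | i != i0) F (D' i).
  by apply: eq_bigr => j /eqP hj; rewrite hs.
lra.
Qed.

Theorem theorem9
  (R : realType)
  (* compact metric space T (pointed, i.e. nonempty; Hausdorff pseudometric = metric) *)
  (T : pseudoPMetricType R) (HTsep : hausdorff_space T)
  (HTcpt : compact [set: T])
  (* finite Borel measure on T *)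
  (mu : {finite_measure set (g_sigma_algebraType (@open T)) -> \bar R})
  (* kernel C and its Mercer data *)
  (C : T -> T -> R)
  (HCcont : continuous (fun p : T * T => C p.1 p.2))
  (HCsym : kernel_symmetric C) (HCpsd : kernel_psd C)
  (lam : nat -> R) (phi : nat -> T -> R)
  (Hlam_pos : forall j, 0 < lam j)
  (Hlam_dec : forall j, lam j.+1 <= lam j)
  (Hphi_meas : forall j,
     measurable_fun [set: g_sigma_algebraType (@open T)]
       (phi j : g_sigma_algebraType (@open T) -> R))
  (Hphi_L2 : forall j,
     mu.-integrable [set: g_sigma_algebraType (@open T)]
       (fun x => ((phi j x) ^+ 2)%:E))
  (Hphi_orth : forall i j,
     Rintegral mu [set: g_sigma_algebraType (@open T)]
       (fun x => phi i x * phi j x) = (i == j)%:R)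
  (Hmercer : forall s t,
     (fun N => \sum_(0 <= j < N) lam j * phi j s * phi j t) @ \oo --> C s t)
  (* eta > 1, finite trace of C^(eta-1), bounded diagonal of C^eta *)
  (eta : R) (Heta : 1 < eta)
  (Htr : cvgn (fun N => \sum_(0 <= j < N) lam j `^ (eta - 1)))
  (Hkappa : exists k : R, forall x : T, kernel_pow lam phi eta x x <= k)
  (* data and loss *)
  (Y : Type) (ell : Y -> R -> R) (M : R)
  (Hell : admissible_loss ell M)
  (psi : R) (Hpsi : 0 < psi) (n : nat) :
  forall (D D' : 'I_n -> T * Y) (fD fD' : T -> R),
    adjacent_datasets D D' ->
    is_reg_minimizer ell D lam phi eta psi fD ->
    is_reg_minimizer ell D' lam phi eta psi fD' ->
    (norm1C mu lam phi (fun x => (fD x - fD' x)%R)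
     <= (M / (psi * n%:R)
         * Num.sqrt (sup [set kernel_pow lam phi eta x x | x in [set: T]])
         * Num.sqrt (trace_pow lam eta))%:E)%E.
Proof.
move=> D D' fD fD' [i0 [_ hsame]] hmD hmD'.
have Hm : forall s, cvgn (fun N => \sum_(0 <= j < N) lam j * phi j s * phi j s).
  by move=> s; apply/cvg_ex; exists (C s s); exact: Hmercer.
have [a ha] := hmD.1.
have [b hb] := hmD'.1.
set S := sup [set kernel_pow lam phi eta x x | x in [set: T]].
set q := Q R lam eta (fun j => a j - b j).
have hd : rkhs_rep lam phi eta (fun x => fD x - fD' x) (fun j => a j - b j).
  have := rep_lin Hlam_pos 1 (-1) ha hb.
  have -> : (fun j => 1 * a j + -1 * b j) = (fun j => a j - b j).
    by apply: funext => j; rewrite mul1r mulN1r.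
  have -> // : (fun x => 1 * fD x + -1 * fD' x) = (fun x => fD x - fD' x).
  by apply: funext => j; rewrite mul1r mulN1r.
have s1 := strong Hlam_pos Hlam_dec Hphi_meas Hphi_L2 Hphi_orth Heta Hm Hkappa Hell Hpsi ha hb hmD.
have s2 := strong Hlam_pos Hlam_dec Hphi_meas Hphi_L2 Hphi_orth Heta Hm Hkappa Hell Hpsi hb ha hmD'.
have qsym : Q R lam eta (fun j => b j - a j) = q.
  rewrite /q /Q.
  have -> // : Qp R lam eta (fun j => b j - a j) = Qp R lam eta (fun j => a j - b j).
  apply: funext => N; rewrite /Qp; apply: eq_bigr => j _.
  by rewrite -opprB sqrrN.
rewrite qsym in s2; rewrite -/q in s1.
have n0 : (0 < n)%N := leq_ltn_trans (leq0n i0) (ltn_ord i0).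
pose ninv : R := n%:R^-1.
have ninv0 : 0 < ninv by rewrite /ninv invr_gt0 ltr0n.
have M0 : 0 <= M.
  have := Hell.2 (D i0).2 1 0; rewrite subr0 normr1 mulr1 => h.
  exact: le_trans (normr_ge0 _) h.
have q0 : 0 <= q.
  by apply: Q_ge0; exact: hd.1.
set r := Num.sqrt q.
set s := Num.sqrt S.
have r0 : 0 <= r by exact: sqrtr_ge0.
have s0 : 0 <= s by exact: sqrtr_ge0.
have qr : q = r ^+ 2 by rewrite /r sqr_sqrtr.
have ev x : `|fD x - fD' x| <= r * s :=
  rep_eval_bound Hlam_pos Hlam_dec Heta Hm Hkappa hd x.
have e1 : ell (D i0).2 (fD' (D i0).1) - ell (D i0).2 (fD (D i0).1) <= M * (r * s).
  apply: le_trans (ler_norm _) _; apply: le_trans (Hell.2 _ _ _) _.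
  by apply: ler_wpM2l => //; rewrite distrC; exact: ev.
have e2 : ell (D' i0).2 (fD (D' i0).1) - ell (D' i0).2 (fD' (D' i0).1) <= M * (r * s).
  apply: le_trans (ler_norm _) _; apply: le_trans (Hell.2 _ _ _) _.
  by apply: ler_wpM2l => //; exact: ev.
have dA : \sum_(i < n) ell (D i).2 (fD' (D i).1) - \sum_(i < n) ell (D' i).2 (fD' (D' i).1)
   = ell (D i0).2 (fD' (D i0).1) - ell (D' i0).2 (fD' (D' i0).1) :=
  @diff_single R _ n D D' (fun z => ell z.2 (fD' z.1)) i0 hsame.
have dB : \sum_(i < n) ell (D i).2 (fD (D i).1) - \sum_(i < n) ell (D' i).2 (fD (D' i).1)
   = ell (D i0).2 (fD (D i0).1) - ell (D' i0).2 (fD (D' i0).1) :=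
  @diff_single R _ n D D' (fun z => ell z.2 (fD z.1)) i0 hsame.
move: s1 s2; rewrite /reg_risk -/ninv.
set A1 := \sum_(i < n) ell (D i).2 (fD' (D i).1).
set A2 := \sum_(i < n) ell (D' i).2 (fD' (D' i).1).
set B1 := \sum_(i < n) ell (D i).2 (fD (D i).1).
set B2 := \sum_(i < n) ell (D' i).2 (fD (D' i).1).
set N1 := rkhs_sqnorm lam phi eta fD.
set N2 := rkhs_sqnorm lam phi eta fD'.
move: dA dB e1 e2; rewrite -/A1 -/A2 -/B1 -/B2 => dA dB e1 e2 s1 s2.
have key1 : 2 * psi * q <= ninv * ((A1 - A2) - (B1 - B2)).
  rewrite mulrBr !mulrBr; lra.
have key2 : ninv * ((A1 - A2) - (B1 - B2)) <= ninv * (2 * (M * (r * s))).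
  by apply: ler_wpM2l; [exact: ltW | lra].
have key : psi * r ^+ 2 <= r * (ninv * M * s).
  rewrite -qr; have := le_trans key1 key2; nra.
have hr : psi * r <= ninv * M * s.
  have [->|rpos] := eqVneq r 0.
    by rewrite mulr0 mulr_ge0 // mulr_ge0 // ltW.
  have rp : 0 < r by rewrite lt0r rpos.
  move: key; rewrite expr2 -mulrA [psi * (r * r)]mulrCA ler_pM2l //.
have hr2 : r <= M / (psi * n%:R) * s.
  have -> : M / (psi * n%:R) * s = ninv * M * s / psi.
    rewrite /ninv; field; apply/andP; split; first by rewrite gt_eqF.
    by rewrite pnatr_eq0 -lt0n.
  by rewrite ler_pdivlMr // mulrC.
set tr := trace_pow lam eta.
have tr0 : 0 <= Num.sqrt tr by exact: sqrtr_ge0.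
have coefE j : l2_coef mu phi (fun x => fD x - fD' x) j = a j - b j :=
  rep_coef Hlam_pos Hlam_dec Hphi_meas Hphi_L2 Hphi_orth Heta Hm Hkappa hd j.
rewrite /norm1C.
apply: lime_le.
  apply: is_cvg_nneseries => j _ _.
  by rewrite lee_fin divr_ge0 // sqrtr_ge0.
apply: nearW => N; rewrite sumEFin lee_fin.
apply: (@le_trans _ _ (r * Num.sqrt tr)); last by apply: ler_wpM2r.
under eq_bigr do rewrite coefE.
have term j : `|a j - b j| / Num.sqrt (lam j) =
   (`|a j - b j| / Num.sqrt (lam j `^ eta)) * Num.sqrt (lam j `^ (eta - 1)).
  have l0 := Hlam_pos j.
  rewrite (@pow_split R eta _ l0) sqrtrM ?powR_ge0 //.
  have h1 : Num.sqrt (lam j `^ (eta - 1)) != 0 by rewrite gt_eqF // sqrtr_gt0 powR_gt0.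
  have h2 : Num.sqrt (lam j) != 0 by rewrite gt_eqF // sqrtr_gt0.
  by field; rewrite h1 h2.
under eq_bigr do rewrite term.
have H := @CS_abs R N (fun j => `|a j - b j| / Num.sqrt (lam j `^ eta))
   (fun j => Num.sqrt (lam j `^ (eta - 1))) q tr.
rewrite -[X in X <= _]ger0_norm; last first.
  apply: sumr_ge0 => j _; apply: mulr_ge0; last exact: sqrtr_ge0.
  by rewrite divr_ge0 // sqrtr_ge0.
apply: H.
  apply: le_trans _ (@Qp_le R lam eta _ N hd.1); rewrite le_eqVlt; apply/orP; left; apply/eqP.
  apply: eq_bigr => j _; rewrite expr_div_n sqr_sqrtr ?powR_ge0 //.
  by rewrite -normrX ger0_norm // sqr_ge0.
have e : forall j, 0 <= lam j `^ (eta - 1) by move=> j; exact: powR_ge0.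
apply: le_trans _ (psum_le_lim _ _ N e Htr); rewrite le_eqVlt; apply/orP; left; apply/eqP.
by apply: eq_bigr => j _; rewrite sqr_sqrtr.
Qed.
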